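(* Let $k\ge 1$. If a bar $k$-visibility graph is triangle-free, then it is a disjoint union of caterpillars.
   Context: A bar $k$-visibility representation is a finite collection of pairwise disjoint closed horizontal line segments (bars) in the plane; two bars are joined by a line of sight if there is a vertical segment with endpoints on the two bars intersecting at most $k$ other bars. The bar $k$-visibility graph has one vertex per bar, two vertices adjacent iff their bars are joined by a line of sight. A caterpillar is a tree in which all vertices are within distance one of a central path. *)

(* Defs.v *)
From mathcomp Require Import all_boot all_order all_algebra.
From mathcomp Require Import boolp reals.
Set Implicit Arguments. Unset Strict Implicit. Unset Printing Implicit Defensive.
Import Order.TTheory GRing.Theory Num.Theory.
Local Open Scope ring_scope.

(* A bar representation with n bars: bar i is the closed horizontal segment
   [bl i, br i] x {by_ i}, with bl i < br i. *)
Definition bars_ok (R : realType) (n : nat) (bl br by_ : 'I_n -> R) : Prop :=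
  (forall i, bl i < br i) /\
  (forall i j, i != j -> by_ i = by_ j -> (br i < bl j) \/ (br j < bl i)).

Definition bar_meets_vseg (R : realType) (n : nat) (bl br by_ : 'I_n -> R)
  (x ya yb : R) (b : 'I_n) : bool :=
  (bl b <= x <= br b) && (Num.min ya yb <= by_ b <= Num.max ya yb).

Definition bar_kvis_adj (R : realType) (n k : nat) (bl br by_ : 'I_n -> R)
  (i j : 'I_n) : Prop :=
  i != j /\ by_ i != by_ j /\
  exists x : R, bl i <= x <= br i /\ bl j <= x <= br j /\
    (#|[set b : 'I_n | (b != i) && (b != j) &&
         bar_meets_vseg bl br by_ x (by_ i) (by_ j) b]| <= k)%N.

Definition bar_kvis_rel (R : realType) (n k : nat) (bl br by_ : 'I_n -> R)
  : rel 'I_n := fun i j => `[< bar_kvis_adj k bl br by_ i j >].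

Definition triangle_free (T : finType) (e : rel T) : Prop :=
  forall a b c : T, ~ (e a b /\ e b c /\ e c a).

Definition acyclic (T : finType) (e : rel T) : Prop :=
  forall p : seq T, uniq p -> (3 <= size p)%N -> ~~ cycle e p.

(* Disjoint union of caterpillars: the graph is a forest and every connected
   component contains a (simple) path such that every vertex of the component
   is on the path or adjacent to a vertex of the path. *)
Definition caterpillar_forest (T : finType) (e : rel T) : Prop :=
  acyclic e /\
  forall x : T, exists p : seq T,
    [/\ p != [::], uniq p, sorted e p, all (connect e x) p &
      forall y, connect e x y -> (y \in p) \/ (exists2 z, z \in p & e z y)].

(* Main.v *)
Require Import Defs.
From mathcomp Require Import all_boot all_order all_algebra.
From mathcomp Require Import boolp reals lra zify.
Set Implicit Arguments. Unset Strict Implicit. Unset Printing Implicit Defensive.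
Import Order.TTheory GRing.Theory Num.Theory.

Section Geo.
Local Open Scope ring_scope.
Variables (R : realType) (k n : nat) (bl br by_ : 'I_n -> R).
Hypothesis hk : (1 <= k)%N.
Hypothesis hok : bars_ok bl br by_.
Hypothesis htf : triangle_free (bar_kvis_rel k bl br by_).

Local Notation e := (bar_kvis_rel k bl br by_).

Definition inb (i : 'I_n) (x : R) : Prop := bl i <= x /\ x <= br i.

Definition B (u w : 'I_n) (x : R) := [set b : 'I_n | (b != u) && (b != w) &&
         bar_meets_vseg bl br by_ x (by_ u) (by_ w) b].

Lemma same_height i j x : by_ i = by_ j -> inb i x -> inb j x -> i = j.
Proof.
move=> h [h1 h2] [h3 h4]; case: hok => _ hd.
case: (eqVneq i j) => // hij; case: (hd i j hij h) => ?; exfalso; lra.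
Qed.

Lemma meets_lt ya yb x b : ya < yb ->
  bar_meets_vseg bl br by_ x ya yb b = (bl b <= x <= br b) && (ya <= by_ b <= yb).
Proof.
move=> h; rewrite /bar_meets_vseg.
by rewrite (min_idPl (ltW h)) (max_idPr (ltW h)).
Qed.

Lemma e_sym i j : e i j -> e j i.
Proof.
move/asboolP=> [hij [hy [x [h1 [h2 hc]]]]]; apply/asboolP.
split; first by rewrite eq_sym.
split; first by rewrite eq_sym.
exists x; split => //; split => //.
set S1 := [set _ | _] in hc; set S2 := [set _ | _].
have -> : S2 = S1.
  apply/setP => b; rewrite !inE /bar_meets_vseg minC maxC.
  by case: (b != i); case: (b != j).
exact: hc.
Qed.

Lemma e_symE i j : e i j = e j i.
Proof. by apply/idP/idP => /e_sym. Qed.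

Lemma e_inter i j : e i j -> i != j /\ exists x, inb i x /\ inb j x.
Proof.
move/asboolP=> [hij [_ [x [/andP[h1 h2] [/andP[h3 h4] _]]]]].
by split => //; exists x.
Qed.

Lemma e_of_B u w x : u != w -> by_ u != by_ w -> inb u x -> inb w x ->
  (#|B u w x| <= k)%N -> e u w.
Proof.
move=> h1 h2 [a1 a2] [a3 a4] hc; apply/asboolP; split => //; split => //.
exists x; split; first by apply/andP.
by split; first by apply/andP.
Qed.

Lemma tri_aux m : forall u v w x, (#|B u w x| < m)%N -> inb u x -> inb v x ->
  inb w x -> by_ u < by_ v -> by_ v < by_ w -> False.
Proof.
elim: m => [//|m IH] u v w x hc hu hv hw huv hvw.
have huw : by_ u < by_ w by lra.
case: (boolP [exists c, (c \in B u w x) && (c != v)]).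
- case/existsP => c /andP[]; rewrite inE (meets_lt _ _ huw).
  move=> /andP[/andP[hcu hcw] /andP[/andP[c1 c2] /andP[c3 c4]]] hcv.
  have hcx : inb c x by [].
  have nv : by_ c != by_ v by apply/eqP => /same_height /(_ hcx hv) /eqP; rewrite (negbTE hcv).
  have nu : by_ c != by_ u by apply/eqP => /same_height /(_ hcx hu) /eqP; rewrite (negbTE hcu).
  have nw : by_ c != by_ w by apply/eqP => /same_height /(_ hcx hw) /eqP; rewrite (negbTE hcw).
  have cu : by_ u < by_ c by rewrite lt_neqAle eq_sym nu c3.
  have cw : by_ c < by_ w by rewrite lt_neqAle nw c4.
  move: nv; rewrite neq_lt => /orP[hlt|hlt].
  + apply: (IH c v w x) => //.
    apply: (leq_trans _ (hc : (#|B u w x| <= m)%N)); apply: proper_card.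
    apply/properP; split.
    * apply/subsetP => b; rewrite !inE (meets_lt _ _ huw) (meets_lt _ _ cw).
      move=> /andP[/andP[hbc hbw] /andP[hx /andP[b1 b2]]].
      rewrite hbw hx b2 (le_trans (ltW cu) b1) andbT /= andbT.
      by apply/eqP => hb; subst b; move: b1; rewrite leNgt cu.
    * exists c; first by rewrite inE (meets_lt _ _ huw) hcu hcw c1 c2 c3 c4.
      by rewrite inE eqxx.
  + apply: (IH u v c x) => //.
    apply: (leq_trans _ (hc : (#|B u w x| <= m)%N)); apply: proper_card.
    apply/properP; split.
    * apply/subsetP => b; rewrite !inE (meets_lt _ _ huw) (meets_lt _ _ cu).
      move=> /andP[/andP[hbu hbc] /andP[hx /andP[b1 b2]]].
      rewrite hbu hx b1 (le_trans b2 (ltW cw)) /= andbT.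
      by apply/eqP => hb; subst b; move: b2; rewrite leNgt cw.
    * exists c; first by rewrite inE (meets_lt _ _ huw) hcu hcw c1 c2 c3 c4.
      by rewrite inE eqxx andbF.
- rewrite negb_exists => /forallP hno.
  have hin b : b \in B u w x -> b = v.
    move=> hb; move: (hno b); rewrite hb /=; by move/negbNE/eqP.
  have nuv : u != v by apply/eqP => h; subst; lra.
  have nvw : v != w by apply/eqP => h; subst; lra.
  have nuw : u != w by apply/eqP => h; subst; lra.
  have hB0 a c : by_ u <= by_ a -> by_ c <= by_ w -> by_ a < by_ c ->
      (a == u) && (c == v) || (a == v) && (c == w) -> (#|B a c x| <= k)%N.
    move=> a1 a2 ac hac.
    have ha : (a == u) || (a == v) by case/orP: hac => /andP[-> _]; rewrite ?orbT.
    have hc' : (c == v) || (c == w) by case/orP: hac => /andP[_ ->]; rewrite ?orbT.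
    rewrite (_ : B a c x = set0) ?cards0 //.
    apply/setP => b; rewrite inE in_set0 (meets_lt _ _ ac).
    apply/negP => /andP[/andP[hba hbc] /andP[hx /andP[b1 b2]]].
    have bu : b != u.
      apply/eqP => hb; subst b.
      case/orP: ha => /eqP ha; subst a; first by rewrite eqxx in hba.
      move: b1; rewrite leNgt; move/negP; apply; lra.
    have bw : b != w.
      apply/eqP => hb; subst b.
      case/orP: hc' => /eqP hc'; subst c; last by rewrite eqxx in hbc.
      move: b2; rewrite leNgt; move/negP; apply; lra.
    have: b \in B u w x.
      by rewrite inE (meets_lt _ _ huw) hx (le_trans a1 b1) (le_trans b2 a2) bu bw.
    move/hin => hb; subst b.
    case/orP: hac => /andP[/eqP ha2 /eqP hc2]; subst a c.
    + by rewrite eqxx in hbc.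
    + by rewrite eqxx in hba.
  have ne_h i j : by_ i < by_ j -> by_ i != by_ j by move=> h; rewrite lt_eqF.
  have e1 : e u v.
    apply: (e_of_B (x:=x)) => //; first exact: ne_h.
    by apply: hB0; rewrite ?lexx ?eqxx ?orbT //; apply: ltW.
  have e2 : e v w.
    apply: (e_of_B (x:=x)) => //; first exact: ne_h.
    by apply: hB0; rewrite ?lexx ?eqxx ?orbT //; apply: ltW.
  have e3 : e u w.
    apply: (e_of_B (x:=x)) => //; first exact: ne_h.
    apply: (leq_trans _ hk).
    rewrite (leq_trans (subset_leq_card (_ : B u w x \subset [set v]))) ?cards1 //.
    by apply/subsetP => b /hin ->; rewrite inE.
  exact: (htf (conj e1 (conj e2 (e_sym e3)))).
Qed.


Lemma triple i j l x : i != j -> j != l -> i != l -> inb i x -> inb j x -> inb l x -> False.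
Proof.
move=> hij hjl hil hi hj hl.
have tri u v w : inb u x -> inb v x -> inb w x -> by_ u < by_ v -> by_ v < by_ w -> False.
  by move=> *; apply: (@tri_aux (#|B u w x|).+1 u v w x).
have d1 : by_ i != by_ j by apply/eqP=> /same_height /(_ hi hj) /eqP; rewrite (negbTE hij).
have d2 : by_ j != by_ l by apply/eqP=> /same_height /(_ hj hl) /eqP; rewrite (negbTE hjl).
have d3 : by_ i != by_ l by apply/eqP=> /same_height /(_ hi hl) /eqP; rewrite (negbTE hil).
move: d1 d2 d3; rewrite !neq_lt => /orP[h1|h1] /orP[h2|h2] /orP[h3|h3];
  solve [ apply: (tri i j l) => // | apply: (tri i l j) => //
        | apply: (tri j i l) => // | apply: (tri j l i) => //
        | apply: (tri l i j) => // | apply: (tri l j i) => // | exfalso; lra ].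
Qed.

Lemma inter_e i j x : i != j -> inb i x -> inb j x -> e i j.
Proof.
move=> hij hi hj; apply: (e_of_B hij _ hi hj).
  by apply/eqP=> /same_height /(_ hi hj) /eqP; rewrite (negbTE hij).
rewrite (_ : B i j x = set0) ?cards0 //.
apply/setP => b; rewrite inE in_set0.
apply/negP => /andP[/andP[hbi hbj] /andP[/andP[h1 h2] _]].
have hb : inb b x by [].
by apply: (triple hij _ _ hi hj hb); rewrite // eq_sym.
Qed.

Lemma min_br (s : seq 'I_n) : s != [::] ->
  exists2 v, v \in s & forall u, u \in s -> br v <= br u.
Proof.
elim: s => [//|a s IH] _.
case: (eqVneq s [::]) => [->|hs].
  by exists a; rewrite ?mem_seq1 // => u; rewrite mem_seq1 => /eqP ->.
have [v hv hm] := IH hs.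
case: (leP (br a) (br v)) => h.
- exists a; first by rewrite in_cons eqxx.
  move=> u; rewrite in_cons => /orP[/eqP->//|/hm]; exact: le_trans.
- exists v; first by rewrite in_cons hv orbT.
  move=> u; rewrite in_cons => /orP[/eqP->|/hm//]; exact: ltW.
Qed.

Lemma acyc : acyclic e.
Proof.
move=> p hu hs; apply/negP => hc.
have hne : p != [::] by case: (p) hs.
have [v hv hmin] := min_br hne.
case/splitPr: hv hu hc hmin hs => p1 p2 hu hc hmin hs.
have hmem := mem_rot (size p1) (p1 ++ v :: p2).
move: hu hc; rewrite -(rot_uniq (size p1)) -(rot_cycle (size p1)) rot_size_cat => hu hc. rewrite cat_cons in hu hc.
have hmin' u : u \in v :: p2 ++ p1 -> br v <= br u.
  by move=> hu'; apply: hmin; rewrite -hmem rot_size_cat.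
have hs2 : (2 <= size (p2 ++ p1))%N by move: hs; rewrite !size_cat /=; lia.
move: hmin' hs2 hu hc.
case: (p2 ++ p1) => [|a t] //.
case/lastP: t => [|t w] //.
move=> hmin' _ hu hc.
move: hc; rewrite /= rcons_path last_rcons => /andP[eva /andP[_ ewv]].
move: hu; rewrite /= !in_cons mem_rcons in_cons !negb_or => /and3P[/and3P[nva nvw _]]; rewrite mem_rcons in_cons negb_or => /andP[naw _] _.
have [_ [xa [hva haa]]] := e_inter eva.
have [_ [xw [hww hvw]]] := e_inter ewv.
have ha : br v <= br a by apply: hmin'; rewrite !in_cons eqxx orbT.
have hw : br v <= br w by apply: hmin'; rewrite !in_cons mem_rcons in_cons eqxx !orbT.
have hvl := (proj1 hok) v.
case: hva => ? ?; case: hvw => ? ?; case: haa => ? ?; case: hww => ? ?.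
apply: (triple nva naw nvw (x := br v)); rewrite /inb; split; lra.
Qed.


Lemma not_e_disj q z : z != q -> ~~ e q z -> forall t, inb q t -> inb z t -> False.
Proof.
move=> hzq hn t hq hz; move/negP: hn; apply; apply: (inter_e (x := t)) => //.
by rewrite eq_sym.
Qed.

Lemma geo a q b w z : a != q -> q != b -> a != b -> w != a -> w != q -> w != b ->
  z != q -> e a q -> e q b -> e q w -> e w z -> ~~ e q z ->
  (forall c, c != a -> c != q -> ~~ e c a) \/ (forall c, c != b -> c != q -> ~~ e c b).
Proof.
move=> naq nqb nab nwa nwq nwb nzq eaq eqb eqw ewz nqz.
have hz := not_e_disj nzq nqz.
have [_ [xa [[? ?] [? ?]]]] := e_inter eaq.
have [_ [xb [[? ?] [? ?]]]] := e_inter eqb.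
have [_ [xw [[? ?] [? ?]]]] := e_inter eqw.
have [_ [xz [[? ?] [? ?]]]] := e_inter ewz.
have hq := (proj1 hok) q.
have nqa : q != a by rewrite eq_sym.
have nbq : b != q by rewrite eq_sym.
have nba : b != a by rewrite eq_sym.
have iso_a : (forall t, inb a t -> inb q t) ->
    (forall c, c != a -> c != q -> ~~ e c a).
  move=> hs c hca hcq; apply/negP => /e_inter [_ [t [hc ha]]].
  exact: (triple hca naq hcq hc ha (hs t ha)).
have iso_b : (forall t, inb b t -> inb q t) ->
    (forall c, c != b -> c != q -> ~~ e c b).
  move=> hs c hcb hcq; apply/negP => /e_inter [_ [t [hc hb]]].
  exact: (triple hcb nbq hcq hc hb (hs t hb)).
case: (ltP xz (bl q)) => hL.
-
  have hwq : inb w (bl q) by split; lra.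
  have hqq : inb q (bl q) by split; lra.
  have la : bl q < bl a.
    case: (ltP (bl q) (bl a)) => // h; exfalso.
    by apply: (triple nwa naq nwq hwq _ hqq); split; lra.
  have lb : bl q < bl b.
    case: (ltP (bl q) (bl b)) => // h; exfalso.
    by apply: (triple nwb nbq nwq hwq _ hqq); split; lra.
  case: (ltP (br a) (bl b)) => h1.
    by left; apply: iso_a => t [? ?]; split; lra.
  case: (ltP (br b) (bl a)) => h2.
    by right; apply: iso_b => t [? ?]; split; lra.
  exfalso; case: (leP (bl a) (bl b)) => h3.
  + by apply: (triple nab nbq naq (x := bl b)); split; lra.
  + by apply: (triple nab nbq naq (x := bl a)); split; lra.
- case: (ltP (br q) xz) => hR; last first.
    by exfalso; apply: (hz xz); split; lra.
  have hwq : inb w (br q) by split; lra.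
  have hqq : inb q (br q) by split; lra.
  have ra : br a < br q.
    case: (ltP (br a) (br q)) => // h; exfalso.
    by apply: (triple nwa naq nwq hwq _ hqq); split; lra.
  have rb : br b < br q.
    case: (ltP (br b) (br q)) => // h; exfalso.
    by apply: (triple nwb nbq nwq hwq _ hqq); split; lra.
  case: (ltP (br a) (bl b)) => h1.
    by right; apply: iso_b => t [? ?]; split; lra.
  case: (ltP (br b) (bl a)) => h2.
    by left; apply: iso_a => t [? ?]; split; lra.
  exfalso; case: (leP (br a) (br b)) => h3.
  + by apply: (triple nab nbq naq (x := br a)); split; lra.
  + by apply: (triple nab nbq naq (x := br b)); split; lra.
Qed.


Lemma esym : symmetric e.
Proof. by move=> i j; rewrite e_symE. Qed.

Definition okp x (p : seq 'I_n) :=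
  [&& p != [::], uniq p, sorted e p & all (connect e x) p].

Definition domp x (p : seq 'I_n) :=
  [forall y, connect e x y ==> (y \in p) || has (fun z => e z y) p].

Lemma sorted_rev_e p : sorted e (rev p) = sorted e p.
Proof.
rewrite rev_sorted; case: p => //= a p.
by apply: eq_path => i j /=; rewrite e_symE.
Qed.

Lemma okp_rev x p : okp x p -> okp x (rev p).
Proof.
case/and4P => h1 h2 h3 h4; apply/and4P; split.
- by case: (p) h1 => // a l _; rewrite rev_cons; case: (rev l).
- by rewrite rev_uniq.
- by rewrite sorted_rev_e.
- by rewrite all_rev.
Qed.

Lemma cross (P : pred 'I_n) q s : path e q s -> P q -> ~~ P (last q s) ->
  exists w z, [/\ e w z, P w, ~~ P z & connect e q w].
Proof.
elim: s q => [|a s IH] q /=; first by move=> _ ->.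
move=> /andP[hqa hp] hPq hl.
case: (boolP (P a)) => hPa.
- have [w [z [h1 h2 h3 h4]]] := IH a hp hPa hl.
  exists w, z; split => //; exact: connect_trans (connect1 hqa) h4.
- by exists q, a; split => //; exact: connect0.
Qed.

Lemma ext1 x q rest w z : okp x (q :: rest) -> w \notin q :: rest ->
  z \notin q :: rest -> z != w -> e q w -> e w z -> connect e x w ->
  connect e x z -> exists p', okp x p' /\ (size (q :: rest) < size p')%N.
Proof.
move=> /and4P[_ hu hs ha] hw hz hzw eqw ewz cw cz.
exists [:: z, w, q & rest]; split => //.
apply/and4P; split => //.
- by rewrite /= in_cons negb_or hzw hz hw.
- by rewrite /= esym ewz esym eqw.
- by rewrite /= cz cw.
Qed.

Lemma ext2 x a q rest w z : okp x [:: a, q & rest] -> w \notin [:: a, q & rest] ->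
  z \notin [:: a, q & rest] -> z != w -> e q w -> e w z -> connect e x w ->
  connect e x z -> exists p', okp x p' /\ (size [:: a, q & rest] < size p')%N.
Proof.
move=> /and4P[_ hu hs ha] hw hz hzw eqw ewz cw cz.
exists [:: z, w, q & rest]; split => //.
have hw' : w \notin q :: rest by move: hw; rewrite in_cons negb_or => /andP[].
have hz' : z \notin q :: rest by move: hz; rewrite in_cons negb_or => /andP[].
move: hu hs ha; rewrite /=.
move=> /andP[_ hu] /andP[_ hs] /andP[_ ha].
apply/and4P; split => //.
- by rewrite /= in_cons negb_or hzw hz' hw' hu.
- by rewrite /= esym ewz esym eqw.
- by rewrite /= cz cw.
Qed.

Lemma sortedL (s : seq 'I_n) u v t : sorted e (s ++ u :: v :: t) -> e u v.
Proof.
elim: s => [|a s IH] /=; first by case/andP.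
by move/path_sorted.
Qed.

Lemma uniqL (s : seq 'I_n) u v t : uniq (s ++ u :: v :: t) -> u != v.
Proof.
rewrite cat_uniq => /and3P[_ _].
by rewrite /= in_cons negb_or => /andP[/andP[h _] _].
Qed.

Lemma uniqL2 (s : seq 'I_n) u v w t : uniq (s ++ u :: v :: w :: t) -> u != w.
Proof.
rewrite cat_uniq => /and3P[_ _].
by rewrite /= !in_cons !negb_or => /andP[/and3P[_ h _] _].
Qed.

Lemma caseL x s1 a q b s2 w z :
  let p := rcons s1 a ++ q :: b :: s2 in
  okp x p -> w \notin p -> z \notin p -> z != w -> e q w -> e w z ->
  connect e x w -> connect e x z ->
  (forall c, c != a -> c != q -> ~~ e c a) ->
  exists p', okp x p' /\ (size p < size p')%N.
Proof.
move=> p; rewrite {}/p.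
case/lastP: s1 => [|s c] /=.
  by move=> h1 h2 h3 h4 h5 h6 h7 h8 _; exact: (ext2 h1 h2 h3 h4 h5 h6 h7 h8).
move=> hok' _ _ _ _ _ _ _ hiso.
case/and4P: hok' => _ hu hs _.
rewrite !cat_rcons in hu hs.
have := hiso c (uniqL hu) (uniqL2 hu).
by rewrite (sortedL hs).
Qed.


Lemma step x p : okp x p -> ~~ domp x p -> exists p', okp x p' /\ (size p < size p')%N.
Proof.
move=> hp; rewrite negb_forall => /existsP [y]; rewrite negb_imply => /andP [hy hN].
have hp0 := hp; case/and4P: hp0 => hne hu hs hall.
pose N := [pred u | (u \in p) || has (fun z => e z u) p].
have [q0 hq0] : exists q0, q0 \in p.
  by case: (p) hne => // a l _; exists a; rewrite in_cons eqxx.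
have hcs := sym_connect_sym esym.
have cq0 : connect e x q0 := allP hall q0 hq0.
have cqy : connect e q0 y by apply: connect_trans _ hy; rewrite hcs.
case/connectP: cqy => s hps hl.
have hNq0 : N q0 by rewrite inE hq0.
have hNl : ~~ N (last q0 s) by rewrite -hl.
have [w [z [ewz hNw hNz cq0w]]] := cross hps hNq0 hNl.
have cw : connect e x w := connect_trans cq0 cq0w.
have cz : connect e x z := connect_trans cw (connect1 ewz).
have hzw : z != w by apply/eqP => h; subst z; by rewrite hNw in hNz.
move: hNz; rewrite inE negb_or => /andP[hzp /hasPn hnz].
have hwp : w \notin p.
  by apply/negP => hw; move: (hnz w hw); rewrite /= ewz.
have [q hq eqw] : exists2 q, q \in p & e q w.
  by move: hNw; rewrite inE (negbTE hwp) /= => /hasP.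
have nzq : z != q by apply/eqP => h; subst z; rewrite hq in hzp.
have nqz : ~~ e q z := hnz q hq.
have [s1 [s2 hps2]] : exists s1 s2, p = s1 ++ q :: s2.
  by case/splitPr: hq => s1 s2; exists s1, s2.
subst p.
clear hq hq0 cq0 hne hall hl hps hN hNq0 hNl hNw hnz N.
case/lastP: s1 hp hu hs hwp hzp => [|s1 a] hp hu hs hwp hzp.
  exact: (ext1 hp hwp hzp hzw eqw ewz cw cz).
case: s2 hp hu hs hwp hzp => [|b s2] hp hu hs hwp hzp.
  have e1 : rev (rcons s1 a ++ [:: q]) = q :: rev (rcons s1 a) by rewrite rev_cat.
  have := okp_rev hp; rewrite e1 => hp'.
  have hw2 : w \notin q :: rev (rcons s1 a) by rewrite -e1 mem_rev.
  have hz2 : z \notin q :: rev (rcons s1 a) by rewrite -e1 mem_rev.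
  have [p' [h1 h2]] := ext1 hp' hw2 hz2 hzw eqw ewz cw cz.
  by exists p'; split => //; move: h2; rewrite -e1 size_rev.
have hu' := hu; rewrite cat_rcons in hu'.
have hs' := hs; rewrite cat_rcons in hs'.
have eaq := sortedL hs'.
have eqb := sortedL hs.
have naq := uniqL hu'.
have nqb := uniqL hu.
have nab := uniqL2 hu'.
have memp u : u \in rcons s1 a ++ [:: q, b & s2] -> w != u.
  by move=> hu2; apply/eqP => h; subst u; rewrite hu2 in hwp.
have nwa : w != a by apply: memp; rewrite mem_cat mem_rcons in_cons eqxx.
have nwq : w != q by apply: memp; rewrite mem_cat in_cons eqxx orbT.
have nwb : w != b by apply: memp; rewrite mem_cat !in_cons eqxx !orbT.
case: (geo naq nqb nab nwa nwq nwb nzq eaq eqb eqw ewz nqz) => hiso.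
  exact: (caseL hp hwp hzp hzw eqw ewz cw cz hiso).
have e1 : rev (rcons s1 a ++ [:: q, b & s2]) = rcons (rev s2) b ++ [:: q, a & rev s1].
  by rewrite rev_cat rev_rcons !rev_cons -!cats1 -!catA.
have := okp_rev hp; rewrite e1 => hp'.
have hw2 : w \notin rcons (rev s2) b ++ [:: q, a & rev s1] by rewrite -e1 mem_rev.
have hz2 : z \notin rcons (rev s2) b ++ [:: q, a & rev s1] by rewrite -e1 mem_rev.
have [p' [h1 h2]] := caseL hp' hw2 hz2 hzw eqw ewz cw cz hiso.
by exists p'; split => //; move: h2; rewrite -e1 size_rev.
Qed.

Lemma exists_dom x : exists p, okp x p /\ domp x p.
Proof.
suff H : forall m p, okp x p -> (n - size p <= m)%N -> exists p', okp x p' /\ domp x p'.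
  apply: (H n [:: x]); last by rewrite leq_subr.
  by rewrite /okp /= connect0.
elim => [|m IH] p hp hm; (case: (boolP (domp x p)) => hd; first by exists p);
  have [p' [hp' hsz]] := step hp hd;
  have hle : (size p' <= n)%N by
    (case/and4P: hp' => _ hu _ _; rewrite -(card_uniqP hu);
     apply: leq_trans (max_card _) _; rewrite card_ord).
- exfalso; lia.
- apply: (IH p' hp'); lia.
Qed.

Lemma main_sec : caterpillar_forest e.
Proof.
split; first exact: acyc.
move=> x; have [p [hp hd]] := exists_dom x.
case/and4P: hp => hne hu hs hall.
exists p; split => // y hy.
move/forallP: hd => /(_ y); rewrite hy /= => /orP[h|/hasP[z hz hzy]].
  by left.
by right; exists z.
Qed.

End Geo.

Theorem mainTheorem12 (R : realType) (k n : nat) (bl br by_ : 'I_n -> R) :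
  (1 <= k)%N ->
  bars_ok bl br by_ ->
  triangle_free (bar_kvis_rel k bl br by_) ->
  caterpillar_forest (bar_kvis_rel k bl br by_).
Proof. by move=> hk hok htf; apply: main_sec. Qed.
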